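(* Let $\sum_{i=0}^\infty a_it^i\in\mathbb{C}_3[[t]]$ be a power series with integral coefficients ($v(a_i)\ge 0$ for all $i$), and let $f(t)=\sum_{i=0}^\infty\frac{a_i}{i+1}t^{i+1}$. If $v(a_0)=0$, $v(a_1)=0$, or $v(a_2)=0$, then $\mathrm{New}_{1/3}(f)\subset[1,3]$.
   Context: $\mathbb{C}_3$ is the completion of $\overline{\mathbb{Q}_3}$ with valuation $v$, $v(3)=1$, $v(0)=\infty$. For a positive rational $m$ and a power series $F(t)=\sum_{u\ge0}c_ut^u$, the Newton polygon $\mathrm{New}_m(F)\subset\mathbb{R}$ is the convex hull of the set of $u\in\mathbb{Z}_{\ge0}$ for which there exists $w\in\mathbb{Q}$ with $w\ge m$ such that $v(c_u)+wu=v(c_{u'})+wu'$ for some $u'\ne u$ and $v(c_u)+wu\le v(c_{u''})+wu''$ for all $u''\in\mathbb{Z}_{\ge0}$. *)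

(* Defs.v *)
From mathcomp Require Import all_boot all_order all_algebra.
Set Implicit Arguments. Unset Strict Implicit. Unset Printing Implicit Defensive.
Import Order.TTheory GRing.Theory Num.Theory.
Local Open Scope ring_scope.

(* v is a (rank-one, Q-valued) valuation on K with v(3) = 1; v is only
   meaningful on nonzero elements, v(0) = +oo by convention. *)
Definition valuation3 (K : fieldType) (v : K -> rat) : Prop :=
  [/\ forall x y : K, x != 0 -> y != 0 -> v (x * y) = v x + v y,
      forall x y : K, x != 0 -> y != 0 -> x + y != 0 ->
        Num.min (v x) (v y) <= v (x + y),
      (3%:R : K) != 0 & v 3%:R = 1].

(* "v(x) >= M" with the convention v(0) = +oo *)
Definition vge (K : fieldType) (v : K -> rat) (x : K) (M : rat) : Prop :=
  x = 0 \/ M <= v x.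

Definition v_complete (K : fieldType) (v : K -> rat) : Prop :=
  forall s : nat -> K,
    (forall M : rat, exists N : nat, forall m n : nat,
        (N <= m)%N -> (N <= n)%N -> vge v (s m - s n) M) ->
    exists l : K, forall M : rat, exists N : nat, forall n : nat,
        (N <= n)%N -> vge v (s n - l) M.

(* v(c) + w u in Q u {+oo}, None standing for +oo *)
Definition vt (K : fieldType) (v : K -> rat) (c : K) (w : rat) (u : nat)
  : option rat := if c == 0 then None else Some (v c + w * u%:R).

Definition ole (x y : option rat) : bool :=
  match x, y with
  | _, None => true
  | None, Some _ => false
  | Some a, Some b => a <= b
  end.

Definition newton_pt (K : fieldType) (v : K -> rat) (m : rat) (F : nat -> K)
  (u : nat) : Prop :=
  exists w : rat, m <= w /\
    (exists u' : nat, u' <> u /\ vt v (F u) w u = vt v (F u') w u') /\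
    (forall u'' : nat, ole (vt v (F u) w u) (vt v (F u'') w u'')).

(* New_m(F): convex hull (in one dimension: convex combinations of two
   points) of the set above; membership of a rational point x. *)
Definition Newton (K : fieldType) (v : K -> rat) (m : rat) (F : nat -> K)
  (x : rat) : Prop :=
  exists u1 u2 : nat, exists t : rat,
    [/\ newton_pt v m F u1, newton_pt v m F u2, 0 <= t <= 1 &
        x = t * u1%:R + (1 - t) * u2%:R].

Definition integ (K : fieldType) (a : nat -> K) : nat -> K :=
  fun n => match n with 0 => 0 | i.+1 => a i / (i.+1)%:R end.

(* Main.v *)
Require Import Defs.
From mathcomp Require Import all_boot all_order all_algebra.
From mathcomp Require Import lra zify.
Import Order.TTheory GRing.Theory Num.Theory.
Local Open Scope ring_scope.

Section V.
Variables (K : fieldType) (v : K -> rat) (hv : valuation3 v).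

Lemma v1 : v 1 = 0.
Proof. case: hv => vM _ _ _. have := vM 1 1 (oner_neq0 _) (oner_neq0 _). rewrite mulr1. lra. Qed.

Lemma vN1 : v (-1) = 0.
Proof. case: hv => vM _ _ _. have h : (-1 : K) != 0 by rewrite oppr_eq0 oner_neq0.
have := vM _ _ h h. rewrite mulrNN mulr1 v1. lra. Qed.

Lemma vN x : x != 0 -> v (- x) = v x.
Proof. case: hv => vM _ _ _ hx. have h : (-1 : K) != 0 by rewrite oppr_eq0 oner_neq0.
rewrite -mulN1r vM // vN1 add0r //. Qed.

Lemma vV x : x != 0 -> v (x^-1) = - v x.
Proof. case: hv => vM _ _ _ hx. have hi : x^-1 != 0 by rewrite invr_eq0.
have := vM _ _ hx hi. rewrite mulfV // v1. lra. Qed.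

Lemma vstrict x y : x != 0 -> y != 0 -> v x < v y -> x + y != 0 /\ v (x + y) = v x.
Proof. case: hv => vM vD _ _ hx hy lt.
have nz : x + y != 0.
  apply/negP => /eqP e. have ey : y = - x by apply/eqP; rewrite -subr_eq0 opprK addrC e.
  move: lt; rewrite ey vN // ltxx //.
split => //.
have h1 := vD _ _ hx hy nz.
have hny : - y != 0 by rewrite oppr_eq0.
have h2 := vD _ _ nz hny. rewrite addrK in h2. have := h2 hx. rewrite vN //.
move: h1. rewrite /Num.min. case: ifP => _; case: ifP => _; lra.
Qed.

Lemma vnat n : (0 < n)%N -> (n%:R : K) != 0 /\ exists k : nat, v n%:R = k%:R /\ (3 ^ k %| n)%N.
Proof.
case: (hv) => vM vD h3 v3.
have v2 : (2%:R : K) != 0 /\ v 2%:R = 0.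
  have e3 : (3%:R : K) = 1 + 2%:R by rewrite -(natrD K 1 2).
  have e : (2%:R : K) = -1 + 3%:R by rewrite e3 addrA addNr add0r.
  have h : (-1 : K) != 0 by rewrite oppr_eq0 oner_neq0.
  have lt : v (-1) < v 3%:R by rewrite vN1 v3.
  rewrite e; have [-> ->] := vstrict _ _ h h3 lt.
  by rewrite vN1.
elim: n {-2}n (leqnn n) => [|N IH] n hn n0; first by case: n hn n0.
have [m [r [en hr]]] : exists m r, n = (m * 3 + r)%N /\ (r < 3)%N.
  by exists (n %/ 3)%N, (n %% 3)%N; rewrite -divn_eq ltn_pmod.
have h3m : (0 < m)%N -> (m * 3)%:R != 0 :> K /\ exists k : nat, v (m * 3)%:R = k.+1%:R /\ (3 ^ k.+1 %| m * 3)%N.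
  move=> m0. have [mn [k [vk dk]]] := IH m ltac:(lia) m0.
  rewrite natrM; split; first by rewrite mulf_neq0.
  exists k; rewrite vM // vk v3 expnSr dvdn_mul //. split => //. rewrite -addn1 natrD //.
subst n; clear hn.
move: hr n0; case: r => [|[|[|]]] // _ n0.
- rewrite addn0 in n0 *. have m0 : (0 < m)%N by case: m IH h3m n0.
  have [nz [k [vk dk]]] := h3m m0. split => //. by exists k.+1.
- case: m IH h3m n0 => [|m] IH h3m n0.
    split; first by rewrite oner_neq0. by exists 0%N; rewrite v1.
  have [nz [k [vk _]]] := h3m isT.
  have lt : v 1 < v (m.+1 * 3)%:R by rewrite v1 vk ltr0n.
  rewrite natrD addrC -[(1%:R : K)]/(1 : K). have [-> ->] := vstrict _ _ (oner_neq0 K) nz lt.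
  split => //; exists 0%N; rewrite v1 //.
- case: m IH h3m n0 => [|m] IH h3m n0.
    case: v2 => a b; split => //. by exists 0%N; rewrite b.
  have [nz [k [vk _]]] := h3m isT.
  case: v2 => a b.
  have lt : v 2%:R < v (m.+1 * 3)%:R by rewrite b vk ltr0n.
  rewrite natrD addrC. have [-> ->] := vstrict _ _ a nz lt.
  split => //; exists 0%N; rewrite b //.
Qed.
End V.
Lemma pow3_ge k : (2 <= k)%N -> (3 * k + 3 <= 3 ^ k)%N.
Proof.
elim: k => [|k IH] // hk. case: k IH hk => [|[|k]] IH hk //.
rewrite expnS. have := IH isT. lia.
Qed.

Lemma natfact {k kj j U} : (3 ^ k %| U)%N -> (4 <= U)%N -> (j <= 2)%N ->
  ((j == 2)%N -> kj = 1%N) -> (3 * k + j.+1 < U + 3 * kj)%N.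
Proof.
move=> d hU hj hkj.
case: k d => [|[|k]] d.
- lia.
- rewrite expn1 in d. case/dvdnP: d => q eq. subst U.
  case: (j =P 2)%N => [e|ne]; first by rewrite hkj ?e //; lia. lia.
- have := pow3_ge (k.+2) isT. have := dvdn_leq (ltn_trans (isT : (0 < 3)%N) hU) d. lia.
Qed.

Theorem lemma7p1 (K : closedFieldType) (v : K -> rat)
  (hv : valuation3 v) (hcomp : v_complete v) (a : nat -> K)
  (hint : forall i : nat, a i != 0 -> 0 <= v (a i))
  (hunit : (a 0%N != 0 /\ v (a 0%N) = 0) \/ (a 1%N != 0 /\ v (a 1%N) = 0)
           \/ (a 2%N != 0 /\ v (a 2%N) = 0)) :
  forall x : rat, Newton v (1 / 3) (integ a) x -> 1 <= x <= 3.
Proof.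
have [j [hj [aj vaj]]] : exists j, [/\ (j <= 2)%N, a j != 0 & v (a j) = 0].
  case: hunit => [[h1 h2]|[[h1 h2]|[h1 h2]]]; [exists 0%N|exists 1%N|exists 2%N]; by [].
have key : forall u, newton_pt v (1/3) (integ a) u -> (1 <= u <= 3)%N.
  move=> u [w [hw [_ hmin]]].
  have [nzj [kj [vkj dkj]]] := @vnat _ _ hv j.+1 isT.
  have cj : integ a j.+1 != 0 by rewrite /= mulf_neq0 // invr_eq0.
  have := hmin j.+1. rewrite /vt (negbTE cj).
  case: u hmin => [|n] _; first by rewrite /= eqxx.
  rewrite /integ. case: eqP => // /eqP cn hle.
  have an : a n != 0 by apply: contraNneq cn => ->; rewrite mul0r.
  have nn : (n.+1%:R : K) != 0 by apply: contraNneq cn => ->; rewrite invr0 mulr0.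
  have [_ [k [vk dk]]] := @vnat _ _ hv n.+1 isT.
  case: (leqP n.+1 3) => // big.
  case: (hv) => vM _ _ v3.
  move: hle; rewrite /= vM // ?invr_eq0 // (@vV _ _ hv) // vk vM // ?invr_eq0 // (@vV _ _ hv) // vkj vaj.
  have hkj : (j == 2)%N -> kj = 1%N.
    move/eqP => e; subst j. apply/eqP; rewrite -(eqr_nat rat) -vkj v3 //.
  have F := natfact (k:=k) dk big hj hkj.
  have F' : ((3 * k + j.+1)%N%:R : rat) < ((n.+1 + 3 * kj)%N)%:R by rewrite ltr_nat.
  rewrite natrD natrM natrD natrM in F'.
  move=> hle.
  have := hint _ an.
  have P : 0 <= (w - 1/3) * (n.+1%:R - j.+1%:R) :> rat.
    apply: mulr_ge0; first by lra.
    rewrite subr_ge0 ler_nat. by apply: ltnW; apply: leq_ltn_trans big.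
  move=> ha. nra.
move=> x [u1 [u2 [t [p1 p2 /andP[t0 t1] ->]]]].
have /andP[a1 b1] := key _ p1. have /andP[a2 b2] := key _ p2.
have A1 : 1 <= u1%:R :> rat by rewrite ler1n.
have A2 : 1 <= u2%:R :> rat by rewrite ler1n.
have B1 : u1%:R <= 3 :> rat by rewrite (ler_nat rat u1 3).
have B2 : u2%:R <= 3 :> rat by rewrite (ler_nat rat u2 3).
apply/andP; split; nra.
Qed.
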